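(* Consider a stochastic block model with $K$ communities, membership matrix $\Theta\in\mathbb M_{n,K}$ with community sizes $n_1,\dots,n_K\ge1$, and symmetric $B\in[0,1]^{K\times K}$ with $\mathrm{rank}(B)=K'<K$. Let $P=\Theta B\Theta^\intercal=U\Sigma U^\intercal$ be its eigenvalue decomposition with $U\in\mathbb R^{n\times K'}$ having orthonormal columns. Let $\Delta=\mathrm{diag}(\sqrt{n_1},\dots,\sqrt{n_K})$ and $\Delta B\Delta=LDL^\intercal$ the eigenvalue decomposition with $L\in\mathbb R^{K\times K'}$. Suppose there exist deterministic sequences $\{\eta_n\}$ and $\{\iota_n\}$ such that $$\min_{1\le k<l\le K}B_{kk}+B_{ll}-2B_{kl}\ge\eta_n>0$$ and $0<\Sigma_{ii}\le\iota_n$ for all $1\le i\le K'$. Then $\min_{k\ne l}\|L_{k\ast}/\sqrt{n_k}-L_{l\ast}/\sqrt{n_l}\|_2\ge\xi_n$ with $\xi_n=\sqrt{\eta_n/\iota_n}$.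
   Context: $\mathbb M_{n,K}$: $n\times K$ 0/1 matrices with exactly one $1$ per row; $n_k$ is the number of rows with their $1$ in column $k$. $M_{k\ast}$ denotes the $k$-th row of $M$. *)

(* Defs.v *)
From HB Require Import structures.
From mathcomp Require Import all_boot all_order all_algebra.
From mathcomp Require Import reals.
Set Implicit Arguments. Unset Strict Implicit. Unset Printing Implicit Defensive.
Import Order.TTheory GRing.Theory Num.Theory.
Local Open Scope ring_scope.

Definition is_membership (R : realType) (n K : nat) (Theta : 'M[R]_(n, K)) :=
  forall i : 'I_n, exists k : 'I_K, forall j : 'I_K, Theta i j = (j == k)%:R.

Definition comm_size (R : realType) (n K : nat) (Theta : 'M[R]_(n, K)) (k : 'I_K)
  : nat := #|[set i : 'I_n | Theta i k == 1]|.

Definition Delta_mx (R : realType) (n K : nat) (Theta : 'M[R]_(n, K)) : 'M[R]_K :=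
  diag_mx (\row_k Num.sqrt ((comm_size Theta k)%:R)).

Definition vnorm (R : realType) (m : nat) (v : 'rV[R]_m) : R :=
  Num.sqrt (\sum_(j < m) v 0 j ^+ 2).

(* Main.v *)
Require Import Defs.
From HB Require Import structures.
From mathcomp Require Import all_boot all_order all_algebra.
From mathcomp Require Import reals ring.
Import Order.TTheory GRing.Theory Num.Theory.
Local Open Scope ring_scope.

Lemma sq_form (R : realType) m (v : 'rV[R]_m) :
  (v *m v^T) 0 0 = \sum_(j < m) v 0 j ^+ 2.
Proof. by rewrite mxE; apply: eq_bigr => j _; rewrite mxE expr2. Qed.

Lemma diag_form (R : realType) m (v : 'rV[R]_m) s :
  (v *m diag_mx s *m v^T) 0 0 = \sum_(j < m) s 0 j * v 0 j ^+ 2.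
Proof.
rewrite mul_mx_diag mxE; apply: eq_bigr => j _; rewrite !mxE expr2; ring.
Qed.

Lemma delta_form (R : realType) K (B : 'M[R]_K) (k l : 'I_K) :
  (delta_mx (0 : 'I_1) k *m B *m (delta_mx (0 : 'I_1) l)^T) 0 0 = B k l.
Proof. by rewrite -rowE trmx_delta -colE !mxE. Qed.

Lemma diag_one (R : realType) K (d e : 'rV[R]_K) :
  (forall j, d 0 j * e 0 j = 1) -> diag_mx d *m diag_mx e = 1%:M.
Proof.
move=> h; rewrite mulmx_diag; apply/matrixP => i j; rewrite !mxE h.
by case: eqP.
Qed.

Lemma ThetaTTheta (R : realType) n K (Theta : 'M[R]_(n, K)) :
  is_membership Theta ->
  Theta^T *m Theta = diag_mx (\row_k (comm_size Theta k)%:R).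
Proof.
move=> hm; apply/matrixP => p q; rewrite !mxE.
have h i : Theta^T p i * Theta i q = ((p == q) && (Theta i p == 1))%:R.
  rewrite mxE; have [k hk] := hm i; rewrite !hk.
  case: (eqVneq p q) => [->|npq] /=.
    by case: eqP => _; rewrite ?mulr1 ?mulr0 ?eqxx ?(@eq_sym _ 0) ?oner_eq0.
  case: (eqVneq p k) => [epk|]; case: (eqVneq q k) => [eqk|] /=;
    rewrite ?mulr0 ?mul0r //.
  by move: npq; rewrite epk eqk eqxx.
under eq_bigr do rewrite h.
case: (eqVneq p q) => [->|npq] /=; last by rewrite big1 // => i _; rewrite mulr0n.
rewrite mulr1n /comm_size -sum1_card natr_sum big_mkcond /=.
rewrite [RHS]big_mkcond; apply: eq_bigr => i _; rewrite inE; by case: (_ == 1).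
Qed.
Lemma sub00 (R : realType) (A B : 'M[R]_1) : (A - B) 0 0 = A 0 0 - B 0 0.
Proof. by rewrite !mxE. Qed.

Theorem lemma2 (R : realType) (n K K' : nat)
  (Theta : 'M[R]_(n, K)) (B : 'M[R]_K)
  (U : 'M[R]_(n, K')) (sigma : 'rV[R]_K')
  (L : 'M[R]_(K, K')) (d : 'rV[R]_K')
  (eta iota : R) :
  is_membership Theta ->
  (forall k : 'I_K, (0 < comm_size Theta k)%N) ->
  B^T = B ->
  (forall k l : 'I_K, 0 <= B k l <= 1) ->
  \rank B = K' ->
  (K' < K)%N ->
  (* P = Theta B Theta^T = U Sigma U^T, U with orthonormal columns *)
  U^T *m U = 1%:M ->
  Theta *m B *m Theta^T = U *m diag_mx sigma *m U^T ->
  (* Delta B Delta = L D L^T, L with orthonormal columns *)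
  L^T *m L = 1%:M ->
  Delta_mx Theta *m B *m Delta_mx Theta = L *m diag_mx d *m L^T ->
  0 < eta ->
  (forall k l : 'I_K, (k < l)%N -> eta <= B k k + B l l - 2 * B k l) ->
  (forall i : 'I_K', 0 < sigma 0 i <= iota) ->
  forall k l : 'I_K, k != l ->
    Num.sqrt (eta / iota) <=
    vnorm ((Num.sqrt ((comm_size Theta k)%:R))^-1 *: row k L
           - (Num.sqrt ((comm_size Theta l)%:R))^-1 *: row l L).
Proof.
move=> hm hpos hBT hB01 hrk hKK hU hP hL hLD heta hB hsig k l nkl.
pose sq (k : 'I_K) : R := Num.sqrt (comm_size Theta k)%:R.
have sqpos j : 0 < sq j by rewrite sqrtr_gt0 ltr0n.
pose Dl := Delta_mx Theta.
pose Di := diag_mx (\row_j (sq j)^-1).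
have DiDl : Di *m Dl = 1%:M.
  by apply: diag_one => j; rewrite !mxE mulVf // gt_eqF.
have DlDi : Dl *m Di = 1%:M.
  by rewrite /Dl /Delta_mx; apply: diag_one => j; rewrite !mxE -/(sq j); have hp := sqpos j; rewrite ?mulVf ?mulfV // gt_eqF.
have DlDl : Dl *m Dl = Theta^T *m Theta.
  rewrite ThetaTTheta // /Dl /Delta_mx mulmx_diag; congr diag_mx.
  by apply/rowP => j; rewrite !mxE -expr2 sqr_sqrtr // ler0n.
have DiT : Di^T = Di by rewrite tr_diag_mx.
have hBe : B = Di *m L *m diag_mx d *m L^T *m Di.
  have <- : Di *m (Dl *m B *m Dl) *m Di = B.
    by rewrite !mulmxA DiDl mul1mx -mulmxA DlDi mulmx1.
  by rewrite hLD !mulmxA.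
pose a : 'rV[R]_K := delta_mx 0 k - delta_mx 0 l.
pose w := a *m Di *m L.
have hw : (sq k)^-1 *: row k L - (sq l)^-1 *: row l L = w.
  rewrite /w /a !mulmxBl -!rowE !row_diag_mx !mxE -!scalemxAl -!rowE.
  done.
rewrite [X in vnorm X]hw /vnorm -sq_form.
pose y := w *m L^T *m Di *m Theta^T.
have yT : y^T = Theta *m Di *m L *m w^T.
  by rewrite /y !trmx_mul !trmxK DiT !mulmxA.
have yy : y *m y^T = w *m w^T.
  rewrite yT /y !mulmxA -(mulmxA _ Theta^T Theta) -DlDl !mulmxA.
  rewrite -(mulmxA _ Di Dl) DiDl mulmx1 -(mulmxA _ Dl Di) DlDi mulmx1.
  by rewrite -(mulmxA _ L^T L) hL mulmx1.
have yPy : y *m (Theta *m B *m Theta^T) *m y^T = w *m diag_mx d *m w^T.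
  rewrite yT /y hBe !mulmxA -(mulmxA _ Theta^T Theta) -DlDl !mulmxA.
  rewrite -(mulmxA _ Di Dl) DiDl mulmx1 -(mulmxA _ Dl Di) DlDi mulmx1.
  rewrite -(mulmxA _ L^T L) hL mulmx1.
  rewrite -(mulmxA _ Theta^T Theta) -DlDl !mulmxA.
  rewrite -(mulmxA _ Di Dl) DiDl mulmx1 -(mulmxA _ Dl Di) DlDi mulmx1.
  by rewrite -(mulmxA _ L^T L) hL mulmx1.
have aBa : a *m B *m a^T = w *m diag_mx d *m w^T.
  by rewrite {1}hBe /w !trmx_mul DiT !mulmxA.
pose u := y *m U.
have uSu : y *m (Theta *m B *m Theta^T) *m y^T = u *m diag_mx sigma *m u^T.
  by rewrite hP /u !trmx_mul !mulmxA.
pose r := y - u *m U^T.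
have rr : r *m r^T = y *m y^T - u *m u^T.
  have e1 : y *m (u *m U^T)^T = u *m u^T by rewrite trmx_mul trmxK mulmxA.
  have e2 : u *m U^T *m y^T = u *m u^T by rewrite -mulmxA -trmx_mul.
  have e3 : u *m U^T *m (u *m U^T)^T = u *m u^T.
    by rewrite trmx_mul trmxK mulmxA -(mulmxA u) hU mulmx1.
  rewrite /r raddfB /= mulmxBl !mulmxBr e1 e2 e3.
  by rewrite subrr subr0.
have Bs : B l k = B k l by rewrite -{1}hBT mxE.
have h1 : eta <= (a *m B *m a^T) 0 0.
  rewrite /a raddfB /= mulmxBl !mulmxBr !sub00 !mulmxBl !sub00 !delta_form Bs.
  have [klt|] := ltnP k l.
    by apply: le_trans (hB _ _ klt) _; rewrite le_eqVlt; apply/orP; left; apply/eqP; ring.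
  rewrite leq_eqVlt => /orP [/eqP/val_inj e|lkt]; first by rewrite e eqxx in nkl.
  by move: (hB _ _ lkt); rewrite Bs => h; apply: le_trans h _; rewrite le_eqVlt; apply/orP; left; apply/eqP; ring.
have h2 : (u *m diag_mx sigma *m u^T) 0 0 <= iota * (u *m u^T) 0 0.
  rewrite diag_form sq_form mulr_sumr; apply: ler_sum => j _.
  by apply: ler_wpM2r; [exact: sqr_ge0 | case/andP: (hsig j)].
have h3 : (u *m u^T) 0 0 <= (w *m w^T) 0 0.
  have : 0 <= (r *m r^T) 0 0 by rewrite sq_form sumr_ge0 // => j _; apply: sqr_ge0.
  by rewrite rr sub00 yy subr_ge0.
have hu0 : 0 <= (u *m u^T) 0 0 by rewrite sq_form sumr_ge0 // => j _; apply: sqr_ge0.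
have hE : eta <= iota * (u *m u^T) 0 0 by rewrite (le_trans h1) // aBa -yPy uSu.
have iota_pos : 0 < iota.
  rewrite ltNge; apply/negP => hi.
  have : iota * (u *m u^T) 0 0 <= 0 by rewrite mulr_le0_ge0.
  by move=> h; move: (le_lt_trans (le_trans hE h) heta); rewrite ltxx.
apply: ler_wsqrtr; rewrite ler_pdivrMr // mulrC.
by apply: le_trans hE _; apply: ler_wpM2l => //; exact: ltW.
Qed.
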